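(* Consider a black-white array (BWA) currently storing $n$ values, i.e. with state variable $\mathtt{total}=n$, and suppose $n$ is $k$-trailed. Then inserting one more value into the BWA causes exactly $k$ recursive merges, namely $\mathrm{merge}(0),\mathrm{merge}(1),\dots,\mathrm{merge}(k-1)$.
   Context: A black-white array (BWA) of size $N=2^K$ stores values from a totally ordered set. It has a white array $W[1..N-1]$ and a black array $B[1..N/2-1]$. For $i\ge 0$, the segment of rank $i$ of either array is the block of indices $[2^i,2^{i+1}-1]$, so it has length $2^i$. An integer state variable $\mathtt{total}$ records the number of stored values and is initially $0$. The segment of rank $i$ is called active iff bit $i$ of $\mathtt{total}$ equals $1$ (bits counted from the least significant bit, which is bit $0$). Between operations, all stored values are held in the active white segments, and each active white segment is sorted in ascending order. Insert$(v)$: if the rank-0 segment is inactive, set $W[1]=v$; otherwise set $B[1]=v$ and perform $\mathrm{merge}(0)$. $\mathrm{merge}(i)$: merge the sorted white and black segments of rank $i$ by a standard two-way merge. If the rank-$(i+1)$ segment is inactive, the sorted result is written into the white segment of rank $i+1$. Otherwise it is written into the black segment of rank $i+1$, and then $\mathrm{merge}(i+1)$ is performed. When an insertion completes, $\mathtt{total}$ has increased by one. A nonnegative integer $n$ is $k$-trailed if its binary expansion has the form $[b_{m-1},\dots,b_{k+1},0,\underbrace{1,\dots,1}_{k}]$, i.e. its $k$ lowest bits are $1$ and bit $k$ is $0$. Every even number is $0$-trailed. *)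

(* Defs.v *)
From mathcomp Require Import all_boot all_order.
Set Implicit Arguments. Unset Strict Implicit. Unset Printing Implicit Defensive.
Import Order.TTheory.
Local Open Scope order_scope.

Section BWA.
Context {disp : Order.disp_t} {T : orderType disp}.

(* Arrays are modelled as total functions nat -> T (indices 1..N-1 used). *)
Record bwa := BWA { W : nat -> T; B : nat -> T; bwa_total : nat }.

Definition bit (n i : nat) : bool := odd (n %/ 2 ^ i).

Definition active (t i : nat) : bool := bit t i.

Definition seg (A : nat -> T) (i : nat) : seq T :=
  [seq A (2 ^ i + j) | j <- iota 0 (2 ^ i)].

Definition write (A : nat -> T) (i : nat) (s : seq T) : nat -> T :=
  fun x => if (2 ^ i <= x) && (x < 2 ^ i.+1) then nth (A x) s (x - 2 ^ i) else A x.

(* merge(i): returns the new arrays and the list of ranks j for which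
   merge(j) was performed (in order).  [t] is the value of total, which is
   only updated once the insertion completes.  [fuel] bounds the recursion
   depth (K suffices for a BWA of size 2^K). *)
Fixpoint merge_rec (fuel i : nat) (Wa Ba : nat -> T) (t : nat)
  : (nat -> T) * (nat -> T) * seq nat :=
  let m := merge <=%O (seg Wa i) (seg Ba i) in
  if active t i.+1 then
    match fuel with
    | 0 => (Wa, write Ba i.+1 m, [:: i])
    | f.+1 =>
        let: (W', B', tr) := merge_rec f i.+1 Wa (write Ba i.+1 m) t in
        (W', B', i :: tr)
    end
  else (write Wa i.+1 m, Ba, [:: i]).

(* Insert(v) on a BWA of size N = 2^K: returns the new state and the
   sequence of ranks of merges performed. *)
Definition insert (K : nat) (s : bwa) (v : T) : bwa * seq nat :=
  let t := bwa_total s in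
  if ~~ active t 0 then (BWA (write (W s) 0 [:: v]) (B s) t.+1, [::])
  else
    let: (W', B', tr) := merge_rec K 0 (W s) (write (B s) 0 [:: v]) t in
    (BWA W' B' t.+1, tr).

(* Between operations: all active white segments are sorted, and the
   number of stored values fits in W[1..N-1]. *)
Definition bwa_valid (K : nat) (s : bwa) : Prop :=
  bwa_total s <= 2 ^ K - 1 /\
  forall i, active (bwa_total s) i -> sorted <=%O (seg (W s) i).

End BWA.

Definition k_trailed (n k : nat) : Prop :=
  (forall i, i < k -> bit n i) /\ ~~ bit n k.

(* Main.v *)
Require Import Defs.
From mathcomp Require Import all_boot all_order.
From mathcomp Require Import zify.

Lemma bitS n i : bit n i.+1 = bit n./2 i.
Proof. by rewrite /bit expnS divnMA -divn2. Qed.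

Lemma bits_lb m : forall n, (forall i, i < m -> bit n i) -> 2 ^ m - 1 <= n.
Proof.
elim: m => [|m IH] n H; first by rewrite expn0.
have H0 : odd n by have := H 0 erefl; rewrite /bit expn0 divn1.
have H1 : 2 ^ m - 1 <= n./2.
  by apply: IH => i Hi; rewrite -bitS; apply: H.
have E := odd_double_half n. rewrite H0 in E.
rewrite expnS -E -muln2. have := expn_gt0 2 m. lia.
Qed.

Lemma trace_eq (disp : Order.disp_t) (T : orderType disp) t j :
  forall fuel i (Wa Ba : nat -> T), j <= fuel ->
  (forall l, l < j -> bit t (i.+1 + l)) -> ~~ bit t (i.+1 + j) ->
  (merge_rec fuel i Wa Ba t).2 = iota i j.+1.
Proof.
elim: j => [|j IH] fuel i Wa Ba Hf Hb Hn.
  by rewrite addn0 in Hn; case: fuel Hf => [|f] _ /=; rewrite /active (negbTE Hn).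
case: fuel Hf => [//|f] Hf /=.
rewrite /active; have := Hb 0 erefl; rewrite addn0 => ->.
set R := merge_rec _ _ _ _ _.
have := IH f i.+1 Wa (write Ba (i+1) (merge <=%O (seg Wa i) (seg Ba i))).
rewrite addn1 -/R; case: R => [[W' B'] tr] /= ->; first by [].
- by [].
- by move=> l Hl; rewrite addSnnS; apply: Hb.
- by rewrite addSnnS.
Qed.

Theorem mainTheorem1 (disp : Order.disp_t) (T : orderType disp)
  (K : nat) (s : @bwa disp T) (v : T) (n k : nat) :
  bwa_valid K s ->
  bwa_total s = n ->
  n.+1 <= 2 ^ K - 1 ->
  k_trailed n k ->
  (insert K s v).2 = iota 0 k.
Proof.
move=> _ Ht HK [Hb Hn].
rewrite /insert Ht /active.
case: k Hb Hn => [|k] Hb Hn.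
  by rewrite (negbTE Hn).
rewrite (Hb 0 erefl) /=.
have HkK : k < K.
  rewrite ltnNge; apply/negP => HKk.
  have := @bits_lb K n (fun i Hi => Hb i (leq_trans Hi (leqW HKk))).
  lia.
set R := merge_rec _ _ _ _ _.
have := @trace_eq disp T n k K 0 (W s) (write (B s) 0 [:: v]).
rewrite -/R; case: R => [[W' B'] tr] /= -> //.
- exact: ltnW.
- by move=> l Hl; apply: Hb.
Qed.
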